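(* Let $C>0$ and for each $A>1$ let $\mathcal{D}_A=\{(\mathbf f,\mathbf g,\mathbf F,\mathbf G,\mathbf u,\mathbf v)\in\mathbb{R}^6:\ \mathbf u,\mathbf v>0,\ 1\le\mathbf u\mathbf v\le A,\ \mathbf f^2\le\mathbf F\mathbf v,\ \mathbf g^2\le\mathbf G\mathbf u\}$ and let $\mathcal{B}_A:\mathcal{D}_A\to\mathbb{R}$ be functions such that (i) $0\le\mathcal{B}_A(X)\le CA\mathbf F^{1/2}\mathbf G^{1/2}$ for all $X\in\mathcal{D}_A$, and (ii) for all $X,X_1,X_2\in\mathcal{D}_A$ with $X=(X_1+X_2)/2$, $\mathcal{B}_A(X)\ge\frac12(\mathcal{B}_A(X_1)+\mathcal{B}_A(X_2))+|\mathbf f_1-\mathbf f_2|\cdot|\mathbf g_1-\mathbf g_2|$, where $\mathbf f_i,\mathbf g_i$ are the first two coordinates of $X_i$. Fix $A>1$, $n\ge1$ and a dyadic interval $I_0\subset\mathbb{R}$, and suppose that for every $I\in\operatorname{chld}_k(I_0)$, $0\le k\le n$, a point $X_I=(\mathbf f_I,\mathbf g_I,\mathbf F_I,\mathbf G_I,\mathbf u_I,\mathbf v_I)\in\mathcal{D}_A$ is given such that $X_I=(X_{I_1}+X_{I_2})/2$ whenever $I\in\operatorname{chld}_k(I_0)$, $0\le k<n$, and $I_1,I_2$ are the children of $I$. Then, with $A'=4.5A$, \[ \Bigl(2^{-n}\!\!\sum_{I\in\operatorname{chld}_n(I_0)}|\mathbf f_I-\mathbf f_{I_0}|\Bigr)\Bigl(2^{-n}\!\!\sum_{I\in\operatorname{chld}_n(I_0)}|\mathbf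 g_I-\mathbf g_{I_0}|\Bigr)\le 72\Bigl(\mathcal{B}_{A'}(X_{I_0})-2^{-n}\!\!\sum_{I\in\operatorname{chld}_n(I_0)}\mathcal{B}_{A'}(X_I)\Bigr). \]
   Context: For a dyadic interval $I$, $\operatorname{chld}_0(I)=\{I\}$ and $\operatorname{chld}_k(I)$ is the set of the $2^k$ dyadic subintervals of $I$ of length $2^{-k}|I|$. Note $\mathcal{D}_A\subset\mathcal{D}_{A'}$ for $A\le A'$. *)

(* Defs.v *)
From Stdlib Require Import Reals List.
Open Scope R_scope.

Record Pt := mkPt { pf : R; pg : R; pF : R; pG : R; pu : R; pv : R }.

Definition inD (A : R) (X : Pt) : Prop :=
  0 < pu X /\ 0 < pv X /\ 1 <= pu X * pv X /\ pu X * pv X <= A /\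
  (pf X) ^ 2 <= pF X * pv X /\ (pg X) ^ 2 <= pG X * pu X.

Definition is_mid (X X1 X2 : Pt) : Prop :=
  pf X = (pf X1 + pf X2) / 2 /\ pg X = (pg X1 + pg X2) / 2 /\
  pF X = (pF X1 + pF X2) / 2 /\ pG X = (pG X1 + pG X2) / 2 /\
  pu X = (pu X1 + pu X2) / 2 /\ pv X = (pv X1 + pv X2) / 2.

Definition rsum (m : nat) (a : nat -> R) : R :=
  fold_right Rplus 0 (map a (seq 0 m)).

(* Average over the 2^n dyadic intervals of generation n:
   2^{-n} * sum_{j < 2^n} a j. *)
Definition davg (n : nat) (a : nat -> R) : R :=
  / (2 ^ n) * rsum (Nat.pow 2 n) a.

(* Main.v *)
Require Import Defs.
From Stdlib Require Import Reals List Lra Lia Psatz.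
Open Scope R_scope.

Lemma fold_plus_c (l : list R) c : fold_right Rplus c l = fold_right Rplus 0 l + c.
Proof. induction l; simpl; [lra | rewrite IHl; lra]. Qed.

Lemma rsum_S m a : rsum (S m) a = rsum m a + a m.
Proof. unfold rsum. rewrite seq_S, map_app, fold_right_app. simpl.
  rewrite fold_plus_c. lra. Qed.

Lemma rsum_0 a : rsum 0 a = 0.
Proof. reflexivity. Qed.

Lemma rsum_ext m a b : (forall i, (i < m)%nat -> a i = b i) -> rsum m a = rsum m b.
Proof. induction m; intros H; [reflexivity|]. rewrite !rsum_S, IHm, H; auto. Qed.

Lemma rsum_le m a b : (forall i, (i < m)%nat -> a i <= b i) -> rsum m a <= rsum m b.
Proof. induction m; intros H; [rewrite !rsum_0; lra|]. rewrite !rsum_S.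
  assert (rsum m a <= rsum m b) by (apply IHm; auto). specialize (H m). 
  assert (a m <= b m) by (apply H; lia). lra. Qed.

Lemma rsum_lin m a b p q : rsum m (fun i => a * p i + b * q i) = a * rsum m p + b * rsum m q.
Proof. induction m; [rewrite !rsum_0; ring|]. rewrite !rsum_S, IHm. ring. Qed.

Lemma rsum_const m c : rsum m (fun _ => c) = c * INR m.
Proof. induction m; [rewrite rsum_0; simpl; ring|]. rewrite rsum_S, IHm, S_INR. ring. Qed.

Lemma rsum_abs m a : Rabs (rsum m a) <= rsum m (fun i => Rabs (a i)).
Proof. induction m; [rewrite !rsum_0, Rabs_R0; lra|]. rewrite !rsum_S.
  eapply Rle_trans; [apply Rabs_triang|]. lra. Qed.

Lemma rsum_add p q a : rsum (p + q) a = rsum p a + rsum q (fun i => a (p + i)%nat).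
Proof. induction q. { rewrite Nat.add_0_r, rsum_0. ring. }
  rewrite Nat.add_succ_r, !rsum_S, IHq. ring. Qed.

Definition bs (a : nat -> R) (d j : nat) : R :=
  rsum (Nat.pow 2 d) (fun i => a (j * Nat.pow 2 d + i)%nat).

Lemma bs_0 a j : bs a 0 j = a j.
Proof. unfold bs. simpl. rewrite rsum_S, rsum_0. rewrite Nat.mul_1_r, Nat.add_0_r. ring. Qed.

Lemma bs_S a d j : bs a (S d) j = bs a d (2 * j) + bs a d (2 * j + 1).
Proof. unfold bs. rewrite Nat.pow_succ_r'.
  replace (2 * 2 ^ d)%nat with (2 ^ d + 2 ^ d)%nat by lia.
  rewrite rsum_add. f_equal; apply rsum_ext; intros i Hi; f_equal; ring. Qed.

Lemma bs_ext a b d j : (forall l, a l = b l) -> bs a d j = bs b d j.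
Proof. intros H. unfold bs. apply rsum_ext. intros; apply H. Qed.

Lemma bs_lin a b p q d j : bs (fun l => a * p l + b * q l) d j = a * bs p d j + b * bs q d j.
Proof. unfold bs. apply rsum_lin. Qed.

Lemma bs_const c d j : bs (fun _ => c) d j = c * 2 ^ d.
Proof. revert j; induction d; intros j. { rewrite bs_0. simpl; ring. }
  rewrite bs_S, !IHd. simpl. ring. Qed.

Lemma bs_le_rng a b d j : (forall i, (i < Nat.pow 2 d)%nat -> a (j * Nat.pow 2 d + i)%nat <= b (j * Nat.pow 2 d + i)%nat) -> bs a d j <= bs b d j.
Proof. intros H. unfold bs. apply rsum_le. auto. Qed.

Lemma bs_le a b d j : (forall l, a l <= b l) -> bs a d j <= bs b d j.
Proof. intros H. apply bs_le_rng. auto. Qed.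

Lemma bs_abs a d j : Rabs (bs a d j) <= bs (fun l => Rabs (a l)) d j.
Proof. unfold bs. apply rsum_abs. Qed.

Lemma davg_bs n a : davg n a = / 2 ^ n * bs a n 0.
Proof. reflexivity. Qed.

Lemma pow2_pos d : (0 < Nat.pow 2 d)%nat.
Proof. induction d; simpl; lia. Qed.

Lemma tree_avg (X : nat -> nat -> Pt) n
  (HXmid : forall k j : nat, (k < n)%nat -> (j < Nat.pow 2 k)%nat ->
     is_mid (X k j) (X (S k) (2 * j)%nat) (X (S k) (2 * j + 1)%nat))
  (c : Pt -> R) (Hc : forall P Q R, is_mid P Q R -> c P = (c Q + c R) / 2) :
  forall d k j, (k + d = n)%nat -> (j < Nat.pow 2 k)%nat ->
    c (X k j) * 2 ^ d = bs (fun l => c (X n l)) d j.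
Proof.
  induction d; intros k j Hkd Hj.
  - assert (k = n) by lia. subst n. rewrite bs_0. rewrite Nat.add_0_r. simpl. ring.
  - rewrite bs_S. rewrite <- (IHd (S k) (2*j)%nat), <- (IHd (S k) (2*j+1)%nat) by (simpl; lia).
    rewrite (Hc _ _ _ (HXmid k j ltac:(lia) Hj)). simpl. field.
Qed.

Definition comb (a : R) (P Q : Pt) : Pt :=
  mkPt (a * pf P + (1 - a) * pf Q) (a * pg P + (1-a)*pg Q) (a*pF P + (1-a)*pF Q)
       (a*pG P + (1-a)*pG Q) (a*pu P + (1-a)*pu Q) (a*pv P + (1-a)*pv Q).

Lemma Pt_eq (P Q : Pt) : pf P = pf Q -> pg P = pg Q -> pF P = pF Q -> pG P = pG Q ->
  pu P = pu Q -> pv P = pv Q -> P = Q.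
Proof. destruct P, Q; simpl; intros; subst; reflexivity. Qed.

Lemma comb1 P Q : comb 1 P Q = P.
Proof. apply Pt_eq; simpl; ring. Qed.
Lemma comb0 P Q : comb 0 P Q = Q.
Proof. apply Pt_eq; simpl; ring. Qed.

Lemma limit_arg x y c : 0 <= c -> (forall N, x >= y - (/2)^N * c) -> x >= y.
Proof.
  intros Hc H. destruct (Rge_dec x y) as [|Hn]; auto. exfalso.
  assert (He : 0 < (y - x) / (c + 1)) by (apply Rdiv_lt_0_compat; lra).
  destruct (pow_lt_1_zero (/2) ltac:(rewrite Rabs_right; lra) _ He) as [N HN].
  specialize (HN N (le_n N)). specialize (H N).
  assert (Hp : 0 < (/2)^N) by (apply pow_lt; lra).
  rewrite Rabs_right in HN by lra.
  assert ((/2)^N * (c+1) < y - x).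
  { apply (Rmult_lt_compat_r (c+1)) in HN; [|lra].
    unfold Rdiv in HN. rewrite Rmult_assoc, Rinv_l in HN by lra. lra. }
  nra.
Qed.

Lemma seg_concave (b : Pt -> R) (A' : R)
  (Hpos : forall X, inD A' X -> 0 <= b X)
  (Hc : forall X X1 X2, inD A' X -> inD A' X1 -> inD A' X2 -> is_mid X X1 X2 ->
     b X >= (b X1 + b X2)/2 + Rabs (pf X1 - pf X2) * Rabs (pg X1 - pg X2))
  P1 P2 (Hseg : forall g, 0 <= g <= 1 -> inD A' (comb g P1 P2)) :
  forall a, 0 <= a <= 1 -> b (comb a P1 P2) >= a * b P1 + (1-a) * b P2.
Proof.
  intros a Ha.
  assert (H1 : 0 <= b P1) by (rewrite <- (comb1 P1 P2); apply Hpos, Hseg; lra).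
  assert (H2 : 0 <= b P2) by (rewrite <- (comb0 P1 P2); apply Hpos, Hseg; lra).
  apply (limit_arg _ _ (b P1 + b P2)); [lra|]. intros N. revert a Ha.
  induction N; intros a Ha.
  - simpl. assert (0 <= b (comb a P1 P2)) by (apply Hpos, Hseg; lra). nra.
  - assert (Hq : 0 < (/2)^N) by (apply pow_lt; lra).
    simpl ((/2)^(S N)).
    pose proof (Rmult_le_pos _ _ (Rabs_pos (pf P1 - pf P2)) (Rabs_pos (pg P1 - pg P2))) as _.
    destruct (Rle_dec a (1/2)).
    + specialize (IHN (2*a) ltac:(lra)).
      assert (Hm : is_mid (comb a P1 P2) (comb 0 P1 P2) (comb (2*a) P1 P2))
        by (unfold is_mid, comb; simpl; repeat split; field).
      pose proof (Hc _ _ _ (Hseg a Ha) (Hseg 0 ltac:(lra)) (Hseg (2*a) ltac:(lra)) Hm) as Hk.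
      rewrite comb0 in Hk.
      pose proof (Rmult_le_pos _ _ (Rabs_pos (pf P2 - pf (comb (2*a) P1 P2))) (Rabs_pos (pg P2 - pg (comb (2*a) P1 P2)))).
      nra.
    + specialize (IHN (2*a-1) ltac:(lra)).
      assert (Hm : is_mid (comb a P1 P2) (comb 1 P1 P2) (comb (2*a-1) P1 P2))
        by (unfold is_mid, comb; simpl; repeat split; field).
      pose proof (Hc _ _ _ (Hseg a Ha) (Hseg 1 ltac:(lra)) (Hseg (2*a-1) ltac:(lra)) Hm) as Hk.
      rewrite comb1 in Hk.
      pose proof (Rmult_le_pos _ _ (Rabs_pos (pf P1 - pf (comb (2*a-1) P1 P2))) (Rabs_pos (pg P1 - pg (comb (2*a-1) P1 P2)))).
      nra.
Qed.

Lemma cs2 g f1 f2 F1 F2 v1 v2 : 0 <= g <= 1 -> 0 < v1 -> 0 < v2 ->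
  f1 ^ 2 <= F1 * v1 -> f2 ^ 2 <= F2 * v2 ->
  (g * f1 + (1 - g) * f2) ^ 2 <= (g * F1 + (1 - g) * F2) * (g * v1 + (1 - g) * v2).
Proof.
  intros Hg H1 H2 Hf1 Hf2.
  assert (Hx : 0 <= F1 * v2 + F2 * v1 - 2 * f1 * f2).
  { assert (Hv : 0 < v1 * v2) by nra.
    assert (0 <= v1 * v2 * (F1 * v2 + F2 * v1 - 2 * f1 * f2)).
    { assert (0 <= (f1 * v2 - f2 * v1)^2) by apply pow2_ge_0.
      assert (0 <= (F1 * v1 - f1^2) * (v2 * v2)) by (apply Rmult_le_pos; nra).
      assert (0 <= (F2 * v2 - f2^2) * (v1 * v1)) by (apply Rmult_le_pos; nra).
      nra. }
    nra. }
  assert (0 <= g * (1 - g)) by nra.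
  assert (0 <= g * g) by nra. assert (0 <= (1-g)*(1-g)) by nra.
  nra.
Qed.

Lemma uv_ge1 g u1 u2 v1 v2 : 0 <= g <= 1 -> 0 < u1 -> 0 < u2 -> 0 < v1 -> 0 < v2 ->
  1 <= u1 * v1 -> 1 <= u2 * v2 -> 1 <= (g * u1 + (1 - g) * u2) * (g * v1 + (1 - g) * v2).
Proof.
  intros Hg Hu1 Hu2 Hv1 Hv2 H1 H2.
  assert (Hs : 2 <= u1 * v2 + u2 * v1).
  { assert (1 <= (u1 * v2) * (u2 * v1)).
    { replace ((u1 * v2) * (u2 * v1)) with ((u1 * v1) * (u2 * v2)) by ring.
      replace 1 with (1 * 1) by ring. apply Rmult_le_compat; lra. }
    assert (0 < u1 * v2) by (apply Rmult_lt_0_compat; lra).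
    assert (0 < u2 * v1) by (apply Rmult_lt_0_compat; lra).
    assert (0 <= (u1*v2 - u2*v1)^2) by apply pow2_ge_0. nra. }
  assert (0 <= g * (1 - g)) by nra.
  assert (0 <= g * g) by nra. assert (0 <= (1-g)*(1-g)) by nra.
  nra.
Qed.

Lemma pos_comb g x y : 0 <= g <= 1 -> 0 < x -> 0 < y -> 0 < g * x + (1 - g) * y.
Proof. intros. destruct (Rle_dec x y); nra. Qed.

Lemma seg_dom A (HA: 1 < A) P1 P2 a1 a2 b1 b2
  (H1 : inD (9/2*A) P1) (H2 : inD (9/2*A) P2)
  (Hu1 : pu P1 <= 5/3 * a1) (Hu2 : pu P2 <= 5/3*a2) (Hv1 : pv P1 <= 5/3*b1) (Hv2 : pv P2 <= 5/3*b2)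
  (ha1 : 0 <= a1) (ha2 : 0 <= a2) (hb1 : 0 <= b1) (hb2 : 0 <= b2)
  (Hab1 : a1*b1 <= A) (Hab2 : a2*b2 <= A) (Hab : (a1+a2)*(b1+b2) <= 4*A) :
  forall g, 0 <= g <= 1 -> inD (9/2*A) (comb g P1 P2).
Proof.
  intros g Hg. unfold inD in *. simpl.
  destruct H1 as (Hu1p & Hv1p & Huv1 & Huv1' & Hf1 & Hg1).
  destruct H2 as (Hu2p & Hv2p & Huv2 & Huv2' & Hf2 & Hg2).
  split; [apply pos_comb; auto|].
  split; [apply pos_comb; auto|].
  split; [apply uv_ge1; auto|].
  split; [|split; apply cs2; auto].
  set (U := g * pu P1 + (1 - g) * pu P2). set (V := g * pv P1 + (1 - g) * pv P2).
  assert (HU : 0 < U) by (apply pos_comb; auto).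
  assert (HV : 0 < V) by (apply pos_comb; auto).
  set (al := g * a1 + (1-g) * a2). set (be := g * b1 + (1-g)*b2).
  assert (HUa : U <= 5/3 * al) by (unfold U, al; nra).
  assert (HVb : V <= 5/3 * be) by (unfold V, be; nra).
  assert (Hal : 0 <= al) by (unfold al; nra). assert (Hbe : 0 <= be) by (unfold be; nra).
  assert (Hcr : a1 * b2 + a2 * b1 <= 4 * A) by nra.
  assert (Hab' : al * be <= 3/2 * A).
  { unfold al, be.
    assert (0 <= g * (1 - g)) by nra.
    assert (0 <= g * g) by nra. assert (0 <= (1-g)*(1-g)) by nra.
    assert (g * (1-g) <= 1/4) by (assert (0 <= (g - 1/2)^2) by apply pow2_ge_0; nra).
    assert (0 <= g*g*(A - a1*b1)) by (apply Rmult_le_pos; lra).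
    assert (0 <= (1-g)*(1-g)*(A - a2*b2)) by (apply Rmult_le_pos; lra).
    assert (0 <= g*(1-g)*(4*A - (a1*b2+a2*b1))) by (apply Rmult_le_pos; lra).
    nra. }
  assert (U * V <= (5/3*al) * (5/3*be)).
  { apply Rmult_le_compat; lra. }
  nra.
Qed.

Definition wc (L : nat -> Pt) (w : nat -> R) (c : Pt -> R) d j :=
  bs (fun l => w l * c (L l)) d j / bs w d j.
Definition Wpt L w d j :=
  mkPt (wc L w pf d j) (wc L w pg d j) (wc L w pF d j) (wc L w pG d j) (wc L w pu d j) (wc L w pv d j).

Lemma div_nonneg x y : 0 <= x -> 0 < y -> 0 <= x / y.
Proof. intros. unfold Rdiv. apply Rmult_le_pos; auto. left; apply Rinv_0_lt_compat; auto. Qed.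

Lemma block_range j k i d n : (j < Nat.pow 2 k)%nat -> (i < Nat.pow 2 d)%nat -> (k + d = n)%nat ->
  (j * Nat.pow 2 d + i < Nat.pow 2 n)%nat.
Proof. intros Hj Hi Hn. subst n. rewrite Nat.pow_add_r. nia. Qed.

Lemma bs_scal c p d j : bs (fun l => c * p l) d j = c * bs p d j.
Proof. rewrite (bs_ext _ (fun l => c * p l + 0 * p l) d j) by (intros; ring).
  rewrite bs_lin. ring. Qed.

Lemma bs_pos_rng p d j : (forall i, (i < Nat.pow 2 d)%nat -> 0 < p (j * Nat.pow 2 d + i)%nat) -> 0 <= bs p d j.
Proof. intros H. rewrite <- (Rmult_0_l (2^d)), <- (bs_const 0 d j). apply bs_le_rng.
  intros i Hi; specialize (H i Hi); lra. Qed.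

Lemma bs_w_lb (w : nat -> R) m d j : (forall l, m <= w l) -> m * 2 ^ d <= bs w d j.
Proof. intros H. rewrite <- (bs_const m d j). apply bs_le. auto. Qed.

Lemma ratio_bd (w p : nat -> R) m d j : 0 < m -> (forall l, m <= w l <= 5/3 * m) ->
  (forall i, (i < Nat.pow 2 d)%nat -> 0 < p (j * Nat.pow 2 d + i)%nat) ->
  bs (fun l => w l * p l) d j / bs w d j <= 5/3 * (bs p d j / 2 ^ d).
Proof.
  intros Hm Hw Hp.
  assert (H2 : 0 < 2 ^ d) by (apply pow_lt; lra).
  assert (HW : m * 2^d <= bs w d j) by (apply bs_w_lb; intros l; apply Hw).
  assert (HW0 : 0 < bs w d j) by nra.
  assert (Hx : bs (fun l => w l * p l) d j <= 5/3 * m * bs p d j).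
  { rewrite <- bs_scal. apply bs_le_rng. intros i Hi. specialize (Hp i Hi).
    specialize (Hw (j * Nat.pow 2 d + i)%nat). nra. }
  assert (Hx0 : 0 <= bs (fun l => w l * p l) d j).
  { apply bs_pos_rng. intros i Hi. specialize (Hp i Hi).
    specialize (Hw (j * Nat.pow 2 d + i)%nat). nra. }
  assert (Hp0 : 0 <= bs p d j) by (apply bs_pos_rng; auto).
  set (t := bs p d j / 2^d).
  assert (Ht : bs p d j = t * 2^d) by (unfold t; field; lra).
  assert (Ht0 : 0 <= t) by (unfold t; apply div_nonneg; lra).
  rewrite Ht in Hx.
  apply (Rmult_le_reg_r (bs w d j)); [lra|].
  unfold Rdiv. rewrite Rmult_assoc, Rinv_l by lra.
  assert (0 <= t * (bs w d j - m * 2^d)) by (apply Rmult_le_pos; lra).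
  nra.
Qed.

Lemma inD_mono A A' P : A <= A' -> inD A P -> inD A' P.
Proof. unfold inD; intros; intuition lra. Qed.

Lemma jensen (b : Pt -> R) (A : R) (HA : 1 < A)
  (Hpos : forall X, inD (9/2*A) X -> 0 <= b X)
  (Hc : forall X X1 X2, inD (9/2*A) X -> inD (9/2*A) X1 -> inD (9/2*A) X2 -> is_mid X X1 X2 ->
     b X >= (b X1 + b X2)/2 + Rabs (pf X1 - pf X2) * Rabs (pg X1 - pg X2))
  (L : nat -> Pt) (n : nat)
  (HL : forall l, (l < Nat.pow 2 n)%nat -> inD A (L l))
  (Hav : forall d k j, (k + d = n)%nat -> (j < Nat.pow 2 k)%nat ->
      (bs (fun l => pu (L l)) d j / 2^d) * (bs (fun l => pv (L l)) d j / 2^d) <= A)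
  (w : nat -> R) (m : R) (Hm : 0 < m) (Hw : forall l, m <= w l <= 5/3 * m) :
  forall d k j, (k + d = n)%nat -> (j < Nat.pow 2 k)%nat ->
    inD (9/2*A) (Wpt L w d j) /\
    bs w d j * b (Wpt L w d j) >= bs (fun l => w l * b (L l)) d j.
Proof.
  induction d; intros k j Hkd Hj.
  - assert (k = n) by lia. subst k.
    assert (Hwj : 0 < w j) by (specialize (Hw j); lra).
    assert (E : Wpt L w 0 j = L j).
    { apply Pt_eq; unfold Wpt, wc; simpl; rewrite !bs_0; field; lra. }
    rewrite E, !bs_0. split; [|lra].
    apply (inD_mono A); [lra|]. apply HL. rewrite Nat.add_0_r in Hkd. subst; auto.
  - assert (Hj1 : (2 * j < Nat.pow 2 (S k))%nat) by (simpl; lia).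
    assert (Hj2 : (2 * j + 1 < Nat.pow 2 (S k))%nat) by (simpl; lia).
    assert (Hkd' : (S k + d = n)%nat) by lia.
    destruct (IHd _ _ Hkd' Hj1) as [HD1 HB1].
    destruct (IHd _ _ Hkd' Hj2) as [HD2 HB2].
    set (P1 := Wpt L w d (2 * j)) in *. set (P2 := Wpt L w d (2 * j + 1)) in *.
    set (W1 := bs w d (2 * j)) in *. set (W2 := bs w d (2 * j + 1)) in *.
    assert (H2d : 0 < 2 ^ d) by (apply pow_lt; lra).
    assert (HW1 : 0 < W1) by (pose proof (bs_w_lb w m d (2*j) ltac:(intros l; apply Hw)); unfold W1; nra).
    assert (HW2 : 0 < W2) by (pose proof (bs_w_lb w m d (2*j+1) ltac:(intros l; apply Hw)); unfold W2; nra).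
    set (be := W1 / (W1 + W2)).
    assert (Hbe : 0 <= be <= 1).
    { unfold be. split; [apply div_nonneg; lra|].
      apply (Rmult_le_reg_r (W1 + W2)); [lra|]. unfold Rdiv.
      rewrite Rmult_assoc, Rinv_l by lra. lra. }
    assert (E : Wpt L w (S d) j = comb be P1 P2).
    { apply Pt_eq; unfold Wpt, wc, comb, P1, P2, Wpt, wc, be; cbn [pf pg pF pG pu pv]; rewrite !bs_S;
        fold W1 W2; field; lra. }
    assert (Hrng : forall jj, (jj < Nat.pow 2 (S k))%nat -> forall i, (i < Nat.pow 2 d)%nat ->
              inD A (L (jj * Nat.pow 2 d + i)%nat)).
    { intros jj Hjj i Hi. apply HL. apply (block_range jj (S k) i d n); auto. }
    set (a1 := bs (fun l => pu (L l)) d (2*j) / 2^d).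
    set (a2 := bs (fun l => pu (L l)) d (2*j+1) / 2^d).
    set (b1 := bs (fun l => pv (L l)) d (2*j) / 2^d).
    set (b2 := bs (fun l => pv (L l)) d (2*j+1) / 2^d).
    assert (Hu1 : pu P1 <= 5/3 * a1).
    { unfold P1, Wpt, wc, a1; simpl. apply (ratio_bd w (fun l => pu (L l)) m); auto.
      intros i Hi. destruct (Hrng _ Hj1 i Hi) as [? _]. auto. }
    assert (Hu2 : pu P2 <= 5/3 * a2).
    { unfold P2, Wpt, wc, a2; simpl. apply (ratio_bd w (fun l => pu (L l)) m); auto.
      intros i Hi. destruct (Hrng _ Hj2 i Hi) as [? _]. auto. }
    assert (Hv1 : pv P1 <= 5/3 * b1).
    { unfold P1, Wpt, wc, b1; simpl. apply (ratio_bd w (fun l => pv (L l)) m); auto.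
      intros i Hi. destruct (Hrng _ Hj1 i Hi) as [? [? _]]. auto. }
    assert (Hv2 : pv P2 <= 5/3 * b2).
    { unfold P2, Wpt, wc, b2; simpl. apply (ratio_bd w (fun l => pv (L l)) m); auto.
      intros i Hi. destruct (Hrng _ Hj2 i Hi) as [? [? _]]. auto. }
    assert (ha1 : 0 <= a1).
    { unfold a1. apply div_nonneg; [|lra]. apply bs_pos_rng.
      intros i Hi. destruct (Hrng _ Hj1 i Hi) as [? _]. auto. }
    assert (ha2 : 0 <= a2).
    { unfold a2. apply div_nonneg; [|lra]. apply bs_pos_rng.
      intros i Hi. destruct (Hrng _ Hj2 i Hi) as [? _]. auto. }
    assert (hb1 : 0 <= b1).
    { unfold b1. apply div_nonneg; [|lra]. apply bs_pos_rng.
      intros i Hi. destruct (Hrng _ Hj1 i Hi) as [? [? _]]. auto. }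
    assert (hb2 : 0 <= b2).
    { unfold b2. apply div_nonneg; [|lra]. apply bs_pos_rng.
      intros i Hi. destruct (Hrng _ Hj2 i Hi) as [? [? _]]. auto. }
    assert (Hab1 : a1 * b1 <= A) by (apply (Hav d (S k)); auto).
    assert (Hab2 : a2 * b2 <= A) by (apply (Hav d (S k)); auto).
    assert (Hab : (a1 + a2) * (b1 + b2) <= 4 * A).
    { pose proof (Hav (S d) k j Hkd Hj) as Hp. rewrite !bs_S in Hp.
      unfold a1, a2, b1, b2.
      replace ((bs (fun l => pu (L l)) d (2 * j) / 2 ^ d + bs (fun l => pu (L l)) d (2 * j + 1) / 2 ^ d) *
               (bs (fun l => pv (L l)) d (2 * j) / 2 ^ d + bs (fun l => pv (L l)) d (2 * j + 1) / 2 ^ d))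
        with (4 * ((bs (fun l => pu (L l)) d (2 * j) + bs (fun l => pu (L l)) d (2 * j + 1)) / 2 ^ S d *
         ((bs (fun l => pv (L l)) d (2 * j) + bs (fun l => pv (L l)) d (2 * j + 1)) / 2 ^ S d)))
        by (simpl; field; lra).
      lra. }
    pose proof (seg_dom A HA P1 P2 a1 a2 b1 b2 HD1 HD2 Hu1 Hu2 Hv1 Hv2 ha1 ha2 hb1 hb2 Hab1 Hab2 Hab) as Hseg.
    rewrite E. split; [apply Hseg; auto|].
    pose proof (seg_concave b (9/2*A) Hpos Hc P1 P2 Hseg be Hbe) as Hcc.
    rewrite !bs_S. fold W1 W2.
    assert (Hkey : (W1 + W2) * (be * b P1 + (1 - be) * b P2) = W1 * b P1 + W2 * b P2)
      by (unfold be; field; lra).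
    assert ((W1 + W2) * b (comb be P1 P2) >= (W1 + W2) * (be * b P1 + (1 - be) * b P2)).
    { apply Rle_ge, Rmult_le_compat_l; lra. }
    lra.
Qed.

Lemma bs_aff al be (k h : nat -> R) d j :
  bs (fun l => (al + be * k l) * h l) d j = al * bs h d j + be * bs (fun l => k l * h l) d j.
Proof. rewrite <- bs_lin. apply bs_ext. intros; ring. Qed.

Lemma main_k (b : Pt -> R) (A : R) (HA : 1 < A)
  (Hpos : forall X, inD (9/2*A) X -> 0 <= b X)
  (Hc : forall X X1 X2, inD (9/2*A) X -> inD (9/2*A) X1 -> inD (9/2*A) X2 -> is_mid X X1 X2 ->
     b X >= (b X1 + b X2)/2 + Rabs (pf X1 - pf X2) * Rabs (pg X1 - pg X2))
  (X : nat -> nat -> Pt) (n : nat)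
  (HXD : forall k j : nat, (k <= n)%nat -> (j < Nat.pow 2 k)%nat -> inD A (X k j))
  (HXmid : forall k j : nat, (k < n)%nat -> (j < Nat.pow 2 k)%nat ->
     is_mid (X k j) (X (S k) (2 * j)%nat) (X (S k) (2 * j + 1)%nat))
  (k : nat -> R) (Hk : forall l, -1 <= k l <= 1) :
  b (X 0%nat 0%nat) - davg n (fun j => b (X n j)) >=
  4/25 * (Rabs (/2^n * bs (fun l => k l * (pf (X n l) - pf (X 0%nat 0%nat))) n 0) *
          Rabs (/2^n * bs (fun l => k l * (pg (X n l) - pg (X 0%nat 0%nat))) n 0)).
Proof.
  set (L := X n). set (X0 := X 0%nat 0%nat).
  assert (H2n : 0 < 2 ^ n) by (apply pow_lt; lra).
  assert (TA : forall c : Pt -> R, (forall P Q R, is_mid P Q R -> c P = (c Q + c R) / 2) ->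
            forall d kk j, (kk + d = n)%nat -> (j < Nat.pow 2 kk)%nat ->
            c (X kk j) * 2 ^ d = bs (fun l => c (L l)) d j).
  { intros c Hcc. apply tree_avg; auto. }
  assert (Tf : pf X0 * 2^n = bs (fun l => pf (L l)) n 0)
    by (apply (TA pf); [unfold is_mid; intuition | lia | simpl; lia]).
  assert (Tg : pg X0 * 2^n = bs (fun l => pg (L l)) n 0)
    by (apply (TA pg); [unfold is_mid; intuition | lia | simpl; lia]).
  assert (TF : pF X0 * 2^n = bs (fun l => pF (L l)) n 0)
    by (apply (TA pF); [unfold is_mid; intuition | lia | simpl; lia]).
  assert (TG : pG X0 * 2^n = bs (fun l => pG (L l)) n 0)
    by (apply (TA pG); [unfold is_mid; intuition | lia | simpl; lia]).
  assert (Tu : pu X0 * 2^n = bs (fun l => pu (L l)) n 0)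
    by (apply (TA pu); [unfold is_mid; intuition | lia | simpl; lia]).
  assert (Tv : pv X0 * 2^n = bs (fun l => pv (L l)) n 0)
    by (apply (TA pv); [unfold is_mid; intuition | lia | simpl; lia]).
  assert (Hav : forall d kk j, (kk + d = n)%nat -> (j < Nat.pow 2 kk)%nat ->
      (bs (fun l => pu (L l)) d j / 2^d) * (bs (fun l => pv (L l)) d j / 2^d) <= A).
  { intros d kk j Hd Hj.
    assert (H2d : 0 < 2 ^ d) by (apply pow_lt; lra).
    assert (Hmu : forall P Q R, is_mid P Q R -> pu P = (pu Q + pu R) / 2) by (unfold is_mid; intuition).
    assert (Hmv : forall P Q R, is_mid P Q R -> pv P = (pv Q + pv R) / 2) by (unfold is_mid; intuition).
    rewrite <- (TA pu Hmu d kk j Hd Hj), <- (TA pv Hmv d kk j Hd Hj).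
    replace (pu (X kk j) * 2 ^ d / 2 ^ d) with (pu (X kk j)) by (field; lra).
    replace (pv (X kk j) * 2 ^ d / 2 ^ d) with (pv (X kk j)) by (field; lra).
    destruct (HXD kk j ltac:(lia) Hj) as (_ & _ & _ & ? & _). auto. }
  assert (HL : forall l, (l < Nat.pow 2 n)%nat -> inD A (L l)).
  { intros l Hl. apply HXD; auto. }
  set (e := / 2 ^ n * bs k n 0).
  assert (Hbk : bs k n 0 = e * 2 ^ n) by (unfold e; field; lra).
  assert (He : -1 <= e <= 1).
  { assert (bs (fun _ => -1) n 0 <= bs k n 0) by (apply bs_le; intros; apply Hk).
    assert (bs k n 0 <= bs (fun _ => 1) n 0) by (apply bs_le; intros; apply Hk).
    rewrite !bs_const in *. rewrite Hbk in *. nra. }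
  set (wp := fun l => (1 - e/5) + /5 * k l).
  set (wm := fun l => (1 + e/5) + - /5 * k l).
  assert (Hwp : forall l, (4 - e)/5 <= wp l <= 5/3 * ((4 - e)/5))
    by (intros l; unfold wp; specialize (Hk l); lra).
  assert (Hwm : forall l, (4 + e)/5 <= wm l <= 5/3 * ((4 + e)/5))
    by (intros l; unfold wm; specialize (Hk l); lra).
  destruct (jensen b A HA Hpos Hc L n HL Hav wp ((4-e)/5) ltac:(lra) Hwp n 0 0 eq_refl ltac:(simpl; lia))
    as [HDp HBp].
  destruct (jensen b A HA Hpos Hc L n HL Hav wm ((4+e)/5) ltac:(lra) Hwm n 0 0 eq_refl ltac:(simpl; lia))
    as [HDm HBm].
  assert (Hsp : bs wp n 0 = 2 ^ n).
  { unfold wp. rewrite (bs_ext _ (fun l => (1 - e/5) * 1 + /5 * k l)) by (intros; ring).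
    rewrite bs_lin, bs_const, Hbk. field. }
  assert (Hsm : bs wm n 0 = 2 ^ n).
  { unfold wm. rewrite (bs_ext _ (fun l => (1 + e/5) * 1 + - /5 * k l)) by (intros; ring).
    rewrite bs_lin, bs_const, Hbk. field. }
  set (Yp := Wpt L wp n 0) in *. set (Ym := Wpt L wm n 0) in *.
  assert (CP : forall c : Pt -> R, c X0 * 2^n = bs (fun l => c (L l)) n 0 ->
             wc L wp c n 0 = ((1 - e/5) * bs (fun l => c (L l)) n 0 + /5 * bs (fun l => k l * c (L l)) n 0) / 2^n
          /\ wc L wm c n 0 = ((1 + e/5) * bs (fun l => c (L l)) n 0 + - /5 * bs (fun l => k l * c (L l)) n 0) / 2^n).
  { intros c _. unfold wc. rewrite Hsp, Hsm. unfold wp, wm. rewrite !bs_aff. auto. }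
  assert (Hmid : is_mid X0 Yp Ym).
  { unfold is_mid, Yp, Ym, Wpt. cbn [pf pg pF pG pu pv].
    destruct (CP pf Tf) as [-> ->]. destruct (CP pg Tg) as [-> ->].
    destruct (CP pF TF) as [-> ->]. destruct (CP pG TG) as [-> ->].
    destruct (CP pu Tu) as [-> ->]. destruct (CP pv Tv) as [-> ->].
    rewrite <- Tf, <- Tg, <- TF, <- TG, <- Tu, <- Tv.
    repeat split; field; lra. }
  assert (HD0 : inD (9/2*A) X0) by (apply (inD_mono A); [lra | apply HXD; simpl; lia]).
  pose proof (Hc X0 Yp Ym HD0 HDp HDm Hmid) as Hmain.
  assert (Df : pf Yp - pf Ym = 2/5 * (/2^n * bs (fun l => k l * (pf (L l) - pf X0)) n 0)).
  { unfold Yp, Ym, Wpt. cbn [pf]. destruct (CP pf Tf) as [-> ->].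
    rewrite (bs_ext (fun l => k l * (pf (L l) - pf X0)) (fun l => 1 * (k l * pf (L l)) + (- pf X0) * k l)) by (intros; ring).
    rewrite bs_lin, Hbk, <- Tf. field; lra. }
  assert (Dg : pg Yp - pg Ym = 2/5 * (/2^n * bs (fun l => k l * (pg (L l) - pg X0)) n 0)).
  { unfold Yp, Ym, Wpt. cbn [pg]. destruct (CP pg Tg) as [-> ->].
    rewrite (bs_ext (fun l => k l * (pg (L l) - pg X0)) (fun l => 1 * (k l * pg (L l)) + (- pg X0) * k l)) by (intros; ring).
    rewrite bs_lin, Hbk, <- Tg. field; lra. }
  rewrite Df, Dg, (Rabs_mult (2/5)), (Rabs_mult (2/5)), (Rabs_right (2/5)) in Hmain by lra.
  rewrite Hsp in HBp. rewrite Hsm in HBm.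
  assert (HS : bs (fun l => wp l * b (L l)) n 0 + bs (fun l => wm l * b (L l)) n 0
               = 2 * bs (fun l => b (L l)) n 0).
  { unfold wp, wm. rewrite !bs_aff. ring. }
  rewrite davg_bs. fold L.
  assert (/ 2 ^ n * bs (fun l => b (L l)) n 0 <= (b Yp + b Ym) / 2).
  { replace ((b Yp + b Ym) / 2) with (/ 2^n * ((2^n * b Yp + 2^n * b Ym) / 2)) by (field; lra).
    apply Rmult_le_compat_l; [left; apply Rinv_0_lt_compat; lra|]. lra. }
  fold X0.
  set (R1 := Rabs (/ 2 ^ n * bs (fun l => k l * (pf (L l) - pf X0)) n 0)) in *.
  set (R2 := Rabs (/ 2 ^ n * bs (fun l => k l * (pg (L l) - pg X0)) n 0)) in *.
  assert (EE : 2 / 5 * R1 * (2 / 5 * R2) = 4/25 * (R1 * R2)) by field.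

  lra.
Qed.

Lemma sgn_facts (x : R) : let s := (if Rle_dec 0 x then 1 else -1) in
  -1 <= s <= 1 /\ s * x = Rabs x /\ forall y, Rabs (s * y) = Rabs y.
Proof. simpl. destruct (Rle_dec 0 x).
  - rewrite Rabs_right by lra. repeat split; try lra. intros; rewrite Rmult_1_l; auto.
  - rewrite Rabs_left by lra. repeat split; try lra. intros y; replace (-1*y) with (-y) by ring; apply Rabs_Ropp.
Qed.

Theorem lemma6p1 (C : R) (HC : 0 < C) (B : R -> Pt -> R)
  (Hbound : forall A : R, 1 < A -> forall X : Pt, inD A X ->
     0 <= B A X /\ B A X <= C * A * sqrt (pF X) * sqrt (pG X))
  (Hconc : forall A : R, 1 < A -> forall X X1 X2 : Pt,
     inD A X -> inD A X1 -> inD A X2 -> is_mid X X1 X2 ->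
     B A X >= (B A X1 + B A X2) / 2 + Rabs (pf X1 - pf X2) * Rabs (pg X1 - pg X2))
  (A : R) (HA : 1 < A) (n : nat) (Hn : (1 <= n)%nat)
  (X : nat -> nat -> Pt)
  (HXD : forall k j : nat, (k <= n)%nat -> (j < Nat.pow 2 k)%nat -> inD A (X k j))
  (HXmid : forall k j : nat, (k < n)%nat -> (j < Nat.pow 2 k)%nat ->
     is_mid (X k j) (X (S k) (2 * j)%nat) (X (S k) (2 * j + 1)%nat)) :
  davg n (fun j => Rabs (pf (X n j) - pf (X 0%nat 0%nat))) *
  davg n (fun j => Rabs (pg (X n j) - pg (X 0%nat 0%nat)))
  <= 72 * (B (9 / 2 * A) (X 0%nat 0%nat) - davg n (fun j => B (9 / 2 * A) (X n j))).
Proof.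
  assert (HA' : 1 < 9/2*A) by lra.
  set (b := B (9/2*A)).
  assert (Hpos : forall P, inD (9/2*A) P -> 0 <= b P) by (intros P HP; apply (Hbound _ HA' P HP)).
  pose proof (Hconc _ HA') as Hc. fold b in Hc.
  pose proof (main_k b A HA Hpos Hc X n HXD HXmid) as MK.
  set (f0 := pf (X 0%nat 0%nat)) in *. set (g0 := pg (X 0%nat 0%nat)) in *.
  set (G0 := b (X 0%nat 0%nat) - davg n (fun j => b (X n j))) in *.
  assert (H2n : 0 < 2 ^ n) by (apply pow_lt; lra).
  assert (Hi : 0 < / 2 ^ n) by (apply Rinv_0_lt_compat; lra).
  set (s := fun l => if Rle_dec 0 (pf (X n l) - f0) then 1 else -1).
  set (t := fun l => if Rle_dec 0 (pg (X n l) - g0) then 1 else -1).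
  assert (Hs : forall l, -1 <= s l <= 1 /\ s l * (pf (X n l) - f0) = Rabs (pf (X n l) - f0) /\
                 forall y, Rabs (s l * y) = Rabs y) by (intros l; apply sgn_facts).
  assert (Ht : forall l, -1 <= t l <= 1 /\ t l * (pg (X n l) - g0) = Rabs (pg (X n l) - g0) /\
                 forall y, Rabs (t l * y) = Rabs y) by (intros l; apply sgn_facts).
  rewrite !davg_bs.
  set (a := / 2 ^ n * bs (fun j => Rabs (pf (X n j) - f0)) n 0).
  set (bb := / 2 ^ n * bs (fun j => Rabs (pg (X n j) - g0)) n 0).
  assert (Hnn : forall h : nat -> R, 0 <= bs (fun l => Rabs (h l)) n 0).
  { intros h. rewrite <- (Rmult_0_l (2^n)), <- (bs_const 0 n 0). apply bs_le; intros; apply Rabs_pos. }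
  assert (Ha0 : 0 <= a) by (apply Rmult_le_pos; [lra | apply (Hnn (fun j => pf (X n j) - f0))]).
  assert (Hb0 : 0 <= bb) by (apply Rmult_le_pos; [lra | apply (Hnn (fun j => pg (X n j) - g0))]).
  assert (Hbs : forall h, Rabs (/ 2 ^ n * bs h n 0) <= / 2 ^ n * bs (fun l => Rabs (h l)) n 0).
  { intros h. rewrite Rabs_mult, (Rabs_right (/ 2 ^ n)) by lra.
    apply Rmult_le_compat_l; [lra | apply bs_abs]. }
  assert (EsF : / 2 ^ n * bs (fun l => s l * (pf (X n l) - f0)) n 0 = a).
  { unfold a. f_equal. apply bs_ext. intros l. apply Hs. }
  assert (EtG : / 2 ^ n * bs (fun l => t l * (pg (X n l) - g0)) n 0 = bb).
  { unfold bb. f_equal. apply bs_ext. intros l. apply Ht. }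
  set (p := / 2 ^ n * bs (fun l => t l * (pf (X n l) - f0)) n 0).
  set (q := / 2 ^ n * bs (fun l => s l * (pg (X n l) - g0)) n 0).
  assert (Hp : Rabs p <= a).
  { unfold p. eapply Rle_trans; [apply Hbs|]. unfold a. right. f_equal. apply bs_ext.
    intros l. apply Ht. }
  assert (Hq : Rabs q <= bb).
  { unfold q. eapply Rle_trans; [apply Hbs|]. unfold bb. right. f_equal. apply bs_ext.
    intros l. apply Hs. }
  assert (Hab : 0 <= a * bb) by (apply Rmult_le_pos; auto).
  destruct (Rle_dec (bb/4) (Rabs q)) as [Cq|Cq].
  { pose proof (MK s (fun l => proj1 (Hs l))) as M. fold f0 g0 G0 in M.
    rewrite EsF in M. fold q in M. rewrite (Rabs_right a) in M by lra.
    assert (a * (bb/4) <= a * Rabs q) by (apply Rmult_le_compat_l; lra).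
    lra. }
  destruct (Rle_dec (a/4) (Rabs p)) as [Cp|Cp].
  { pose proof (MK t (fun l => proj1 (Ht l))) as M. fold f0 g0 G0 in M.
    rewrite EtG in M. fold p in M. rewrite (Rabs_right bb) in M by lra.
    assert ((a/4) * bb <= Rabs p * bb) by (apply Rmult_le_compat_r; lra).
    lra. }
  assert (Hk3 : forall l, -1 <= /2 * s l + /2 * t l <= 1).
  { intros l. destruct (Hs l) as [? _]. destruct (Ht l) as [? _]. lra. }
  pose proof (MK (fun l => /2 * s l + /2 * t l) Hk3) as M. fold f0 g0 G0 in M.
  rewrite (bs_ext (fun l => (/2 * s l + /2 * t l) * (pf (X n l) - f0))
     (fun l => /2 * (s l * (pf (X n l) - f0)) + /2 * (t l * (pf (X n l) - f0)))) in M by (intros; ring).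
  rewrite (bs_ext (fun l => (/2 * s l + /2 * t l) * (pg (X n l) - g0))
     (fun l => /2 * (s l * (pg (X n l) - g0)) + /2 * (t l * (pg (X n l) - g0)))) in M by (intros; ring).
  rewrite !bs_lin in M.
  replace (/ 2 ^ n * (/ 2 * bs (fun l => s l * (pf (X n l) - f0)) n 0 +
                      / 2 * bs (fun l => t l * (pf (X n l) - f0)) n 0)) with ((a + p)/2) in M
    by (rewrite <- EsF; unfold p; field; lra).
  replace (/ 2 ^ n * (/ 2 * bs (fun l => s l * (pg (X n l) - g0)) n 0 +
                      / 2 * bs (fun l => t l * (pg (X n l) - g0)) n 0)) with ((q + bb)/2) in M
    by (rewrite <- EtG; unfold q; field; lra).
  assert (Hp' : - (a/4) < p) by (pose proof (Rle_abs (-p)); rewrite Rabs_Ropp in *; lra).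
  assert (Hq' : - (bb/4) < q) by (pose proof (Rle_abs (-q)); rewrite Rabs_Ropp in *; lra).
  rewrite (Rabs_right ((a+p)/2)), (Rabs_right ((q+bb)/2)) in M by lra.
  assert (3*a/8 * (3*bb/8) <= (a+p)/2 * ((q+bb)/2)) by (apply Rmult_le_compat; lra).
  lra.
Qed.
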